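(* For every LTL formula $\varphi$ in positive normal form, $\Theta(\mathrm{LF}(\varphi)) \Leftrightarrow \varphi$.
   Context: LTL formulae in positive normal form (PNF) over a finite set $AP$ of atomic propositions: $\varphi,\psi ::= p \mid \neg p \mid \mathbf{tt} \mid \mathbf{ff} \mid \varphi\wedge\psi \mid \varphi\vee\psi \mid \bigcirc\varphi \mid \varphi\,\mathcal{U}\,\psi \mid \varphi\,\mathcal{R}\,\psi$, interpreted over infinite words $\sigma\in\Sigma^\omega$ with an interpretation $I:\Sigma\to\mathcal{P}(AP)$ in the standard way ($\bigcirc$ = next, $\mathcal{U}$ = until, $\mathcal{R}$ = release). A temporal formula is one not starting with a conjunction or disjunction. A literal $\ell$ is an element of $AP\cup\neg AP$. A monomial $\mu,\nu$ is either $\mathbf{ff}$ or a set of literals not containing both $\ell$ and $\neg\ell$; $\Theta(\mu)=\mathbf{ff}$ if $\mu=\mathbf{ff}$, otherwise $\Theta(\mu)=\bigwedge\mu$ (so the empty monomial, written $\mathbf{tt}$, has $\Theta=\mathbf{tt}$). Smart conjunction $\mu\sqcap\nu$ is $\mathbf{ff}$ if either is $\mathbf{ff}$ or if $\mu\cup\nu$ contains some $\ell$ and $\neg\ell$, and $\mu\cup\nu$ otherwise. $\varphi\,\dot\wedge\,\psi$ denotes formal conjunction of temporal formulae, normalized modulo associativity, commutativity and idempotence using a fixed total order on formulae ($\mathbf{tt}$ is the empty formal conjunction). $\mathrm{simp}(\varphi\wedge\psi)=\{\varphi'\,\dot\wedge\,\psi' \mid \varphi'\in\mathrm{simp}(\varphi),\psi'\in\mathrm{simp}(\psi)\}$,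 $\mathrm{simp}(\varphi\vee\psi)=\mathrm{simp}(\varphi)\cup\mathrm{simp}(\psi)$, $\mathrm{simp}(\varphi)=\{\varphi\}$ for temporal $\varphi$. Linear factors: $\mathrm{LF}(\ell)=\{\langle\{\ell\},\mathbf{tt}\rangle\}$; $\mathrm{LF}(\mathbf{tt})=\{\langle\mathbf{tt},\mathbf{tt}\rangle\}$; $\mathrm{LF}(\mathbf{ff})=\{\}$; $\mathrm{LF}(\varphi\vee\psi)=\mathrm{LF}(\varphi)\cup\mathrm{LF}(\psi)$; $\mathrm{LF}(\varphi\wedge\psi)=\{\langle\mu\sqcap\nu,\varphi'\,\dot\wedge\,\psi'\rangle \mid \langle\mu,\varphi'\rangle\in\mathrm{LF}(\varphi),\langle\nu,\psi'\rangle\in\mathrm{LF}(\psi),\mu\sqcap\nu\neq\mathbf{ff}\}$; $\mathrm{LF}(\bigcirc\varphi)=\{\langle\mathbf{tt},\varphi'\rangle\mid\varphi'\in\mathrm{simp}(\varphi)\}$; $\mathrm{LF}(\varphi\,\mathcal{U}\,\psi)=\mathrm{LF}(\psi)\cup\{\langle\mu,\varphi'\,\dot\wedge\,(\varphi\,\mathcal{U}\,\psi)\rangle\mid\langle\mu,\varphi'\rangle\in\mathrm{LF}(\varphi)\}$; $\mathrm{LF}(\varphi\,\mathcal{R}\,\psi)=\{\langle\mu\sqcap\nu,\varphi'\,\dot\wedge\,\psi'\rangle\mid\langle\mu,\varphi'\rangle\in\mathrm{LF}(\varphi),\langle\nu,\psi'\rangle\in\mathrm{LF}(\psi),\mu\sqcap\nu\neq\mathbf{ff}\}\cup\{\langle\nu,\psi'\,\dot\wedge\,(\varphi\,\mathcal{R}\,\psi)\rangle\mid\langle\nu,\psi'\rangle\in\mathrm{LF}(\psi)\}$.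 For a set of linear factors, $\Theta(\{\langle\mu_i,\varphi_i\rangle\mid i\in I\})=\bigvee_{i\in I}(\Theta(\mu_i)\wedge\bigcirc\varphi_i)$. *)

(* Defs.v *)
From mathcomp Require Import all_boot.
Set Implicit Arguments. Unset Strict Implicit. Unset Printing Implicit Defensive.

Section LTL.
Variable AP : finType.

Inductive ltl : Type :=
| Atom of AP
| NAtom of AP
| TT | FF
| And of ltl & ltl
| Or of ltl & ltl
| Next of ltl
| Until of ltl & ltl
| Release of ltl & ltl.

Definition sdrop {Sigma : Type} (k : nat) (w : nat -> Sigma) : nat -> Sigma :=
  fun n => w (k + n).

Fixpoint sat {Sigma : Type} (I : Sigma -> {set AP}) (w : nat -> Sigma) (f : ltl)
  : Prop :=
  match f with
  | Atom p => p \in I (w 0)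
  | NAtom p => p \notin I (w 0)
  | TT => True
  | FF => False
  | And f g => sat I w f /\ sat I w g
  | Or f g => sat I w f \/ sat I w g
  | Next f => sat I (sdrop 1 w) f
  | Until f g => exists k, sat I (sdrop k w) g /\
                   forall j, j < k -> sat I (sdrop j w) f
  | Release f g => forall k, sat I (sdrop k w) g \/
                   exists j, j < k /\ sat I (sdrop j w) f
  end.

(* literals: (p, true) is p, (p, false) is ~ p *)
Definition literal := (AP * bool)%type.
(* monomials: None is ff, Some s is the set of literals s *)
Definition monomial := option (seq literal).

Definition consistent (s : seq literal) : bool :=
  all (fun l => (l.1, ~~ l.2) \notin s) s.

Definition smart_and (m n : monomial) : monomial :=
  match m, n with
  | Some s, Some t => if consistent (s ++ t) then Some (undup (s ++ t)) else None
  | _, _ => None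
  end.

(* formal conjunction of temporal formulae: list of conjuncts
   (tt = empty list) for ACI normalization *)
Definition fconj := seq ltl.
Definition fand (a b : fconj) : fconj := a ++ b.

Fixpoint simp (f : ltl) : seq fconj :=
  match f with
  | And f g => [seq fand a b | a <- simp f, b <- simp g]
  | Or f g => simp f ++ simp g
  | _ => [:: [:: f]]
  end.

Definition lfactor := (monomial * fconj)%type.

Definition and_factors (L1 L2 : seq lfactor) : seq lfactor :=
  [seq x <- [seq (smart_and p.1 q.1, fand p.2 q.2) | p <- L1, q <- L2]
     | x.1 != None].

Fixpoint LF (f : ltl) : seq lfactor :=
  match f with
  | Atom p => [:: (Some [:: (p, true)], [::])]
  | NAtom p => [:: (Some [:: (p, false)], [::])]
  | TT => [:: (Some [::], [::])]
  | FF => [::]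
  | Or f g => LF f ++ LF g
  | And f g => and_factors (LF f) (LF g)
  | Next f => [seq (Some [::], c) | c <- simp f]
  | Until f g => LF g ++ [seq (p.1, fand p.2 [:: Until f g]) | p <- LF f]
  | Release f g => and_factors (LF f) (LF g)
                   ++ [seq (p.1, fand p.2 [:: Release f g]) | p <- LF g]
  end.

Definition lit_formula (l : literal) : ltl :=
  if l.2 then Atom l.1 else NAtom l.1.

Definition Theta_mon (m : monomial) : ltl :=
  match m with
  | None => FF
  | Some s => foldr And TT (map lit_formula s)
  end.

Definition fconj_formula (c : fconj) : ltl := foldr And TT c.

Definition Theta (L : seq lfactor) : ltl :=
  foldr Or FF [seq And (Theta_mon p.1) (Next (fconj_formula p.2)) | p <- L].

Definition ltl_equiv (f g : ltl) : Prop :=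
  forall (Sigma : Type) (I : Sigma -> {set AP}) (w : nat -> Sigma),
    sat I w f <-> sat I w g.

End LTL.

(* Main.v *)
Require Import Defs.
From mathcomp Require Import all_boot.
From Stdlib Require Classical.
Set Implicit Arguments. Unset Strict Implicit. Unset Printing Implicit Defensive.

Section Proof.
Variable AP : finType.
Variable Sigma : Type.
Variable I : Sigma -> {set AP}.

Notation S := (@sat AP Sigma I).

Lemma sat_ext (f : ltl AP) : forall w w', (forall n, w n = w' n) -> (S w f <-> S w' f).
Proof.
elim: f => [p|p|||f IHf g IHg|f IHf g IHg|f IHf|f IHf g IHg|f IHf g IHg] w w' E /=.
- by rewrite E.
- by rewrite E.
- by [].
- by [].
- by rewrite (IHf w w') // (IHg w w').
- by rewrite (IHf w w') // (IHg w w').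
- by apply: IHf => n; rewrite /sdrop E.
- have Ek : forall k n, sdrop k w n = sdrop k w' n by move=> k n; rewrite /sdrop E.
  split=> [[k [Hg Hf]]|[k [Hg Hf]]]; exists k; split.
  + by rewrite -(IHg _ _ (Ek k)).
  + by move=> j /Hf; rewrite (IHf _ _ (Ek j)).
  + by rewrite (IHg _ _ (Ek k)).
  + by move=> j /Hf; rewrite (IHf _ _ (Ek j)).
- have Ek : forall k n, sdrop k w n = sdrop k w' n by move=> k n; rewrite /sdrop E.
  split=> H k; case: (H k) => [Hg|[j [Hj Hf]]].
  + by left; rewrite -(IHg _ _ (Ek k)).
  + by right; exists j; split => //; rewrite -(IHf _ _ (Ek j)).
  + by left; rewrite (IHg _ _ (Ek k)).
  + by right; exists j; split => //; rewrite (IHf _ _ (Ek j)).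
Qed.

Lemma sdropS w j f : S (sdrop j (sdrop 1 w)) f <-> S (sdrop j.+1 w) f.
Proof. by apply: sat_ext => n; rewrite /sdrop add1n addSn. Qed.

Lemma sdrop0 w f : S (sdrop 0 w) f <-> S w f.
Proof. by apply: sat_ext. Qed.

Lemma until_exp w f g : S w (Until f g) <-> S w g \/ (S w f /\ S (sdrop 1 w) (Until f g)).
Proof.
split => /=.
- move=> [[|k] [Hg Hf]].
  + by left; apply/sdrop0.
  + right; split; first by apply/sdrop0; apply: (Hf 0).
    exists k; split; first by apply/sdropS.
    by move=> j Hj; apply/sdropS; apply: Hf.
- move=> [Hg|[Hf [k [Hg Hk]]]].
  + by exists 0; split => //; apply/sdrop0.
  + exists k.+1; split; first by apply/sdropS.
    move=> [|j] Hj; first by apply/sdrop0.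
    by apply/sdropS; apply: Hk.
Qed.

Lemma release_exp w f g : S w (Release f g) <->
  (S w f /\ S w g) \/ (S w g /\ S (sdrop 1 w) (Release f g)).
Proof.
split => /=.
- move=> H.
  have Hg : S w g by case: (H 0) => [/sdrop0 //|[j [//]]].
  case: (Classical_Prop.classic (S w f)) => Hf; [by left | right; split => //].
  move=> k; case: (H k.+1) => [Hk|[[|j] [Hj Hfj]]]; first by left; apply/sdropS.
  + by case: Hf; apply/sdrop0.
  + by right; exists j; split => //; apply/sdropS.
- move=> [[Hf Hg]|[Hg H]] [|k].
  + by left; apply/sdrop0.
  + by right; exists 0; split => //; apply/sdrop0.
  + by left; apply/sdrop0.
  + case: (H k) => [/sdropS Hk|[j [Hj Hfj]]]; first by left.
    by right; exists j.+1; split => //; apply/sdropS.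
Qed.

Lemma fconj_cat w a b : S w (fconj_formula (a ++ b)) <-> S w (fconj_formula a) /\ S w (fconj_formula b).
Proof. elim: a => [|x a IH] /=; first by tauto. by rewrite IH; tauto. Qed.

Definition litb w (l : literal AP) := (l.1 \in I (w 0)) == l.2.

Lemma mon_sat w s : S w (Theta_mon (Some s)) <-> all (litb w) s.
Proof.
elim: s => [|l s IH] /=; first by [].
rewrite IH /litb /lit_formula; case: l => x [] /=.
- by case: (x \in I (w 0)); split => //; case.
- by case: (x \in I (w 0)); split => //; case.
Qed.

Lemma all_consistent w u : all (litb w) u -> consistent u.
Proof.
move=> /allP H; apply/allP => l Hl; apply/negP => Hl'.
move: (H _ Hl) (H _ Hl'); rewrite /litb /=.
by case: (l.1 \in I (w 0)); case: l.2.
Qed.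

Lemma smart_and_sat w m n : S w (Theta_mon (smart_and m n)) <->
  S w (Theta_mon m) /\ S w (Theta_mon n).
Proof.
case: m => [s|] /=; last by tauto.
case: n => [t|] /=; last by tauto.
rewrite !mon_sat.
case: ifP => Hc.
- rewrite mon_sat.
  have -> : all (litb w) (undup (s ++ t)) = all (litb w) (s ++ t).
    by apply: eq_all_r => x; rewrite mem_undup.
  by rewrite all_cat; split => [/andP//|[-> ->]].
- split => // [[Hs Ht]].
  by move: Hc; rewrite (@all_consistent w (s ++ t)) // all_cat Hs Ht.
Qed.

Lemma Theta_cat w L1 L2 : S w (Theta (L1 ++ L2)) <-> S w (Theta L1) \/ S w (Theta L2).
Proof. elim: L1 => [|p L IH] /=; first by tauto. by rewrite IH; tauto. Qed.

Lemma Theta_next w L h :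
  S w (Theta [seq (p.1, fand p.2 [:: h]) | p <- L]) <-> S w (Theta L) /\ S (sdrop 1 w) h.
Proof.
elim: L => [|p L IH] /=; first by tauto.
rewrite IH /fand fconj_cat /=; tauto.
Qed.

Lemma Theta_and1 w p L2 :
  S w (Theta [seq x <- [seq (smart_and p.1 q.1, fand p.2 q.2) | q <- L2] | x.1 != None])
  <-> (S w (Theta_mon p.1) /\ S (sdrop 1 w) (fconj_formula p.2)) /\ S w (Theta L2).
Proof.
elim: L2 => [|q L IH] /=; first by tauto.
case: ifP => Hn /=.
- rewrite IH smart_and_sat /fand fconj_cat; tauto.
- move/negbFE/eqP: Hn => Hn.
  have : ~ S w (Theta_mon (smart_and p.1 q.1)) by rewrite Hn.
  rewrite IH smart_and_sat /fand; tauto.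
Qed.

Lemma Theta_and w L1 L2 : S w (Theta (and_factors L1 L2)) <-> S w (Theta L1) /\ S w (Theta L2).
Proof.
rewrite /and_factors; elim: L1 => [|p L IH] /=; first by tauto.
rewrite filter_cat Theta_cat Theta_and1 IH; tauto.
Qed.

Definition Sm (cs : seq (fconj AP)) : ltl AP := foldr (@Or AP) (@FF AP) (map (@fconj_formula AP) cs).

Lemma Sm_cat w A B : S w (Sm (A ++ B)) <-> S w (Sm A) \/ S w (Sm B).
Proof. rewrite /Sm; elim: A => [|a A IH] /=; first by tauto. by rewrite IH; tauto. Qed.

Lemma Sm_map w a B : S w (Sm [seq fand a b | b <- B]) <-> S w (fconj_formula a) /\ S w (Sm B).
Proof.
rewrite /Sm; elim: B => [|b B IH] /=; first by tauto.
by rewrite IH /fand fconj_cat; tauto.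
Qed.

Lemma Sm_allpairs w A B : S w (Sm [seq fand a b | a <- A, b <- B]) <-> S w (Sm A) /\ S w (Sm B).
Proof.
elim: A => [|a A IH] /=; first by rewrite /Sm /=; tauto.
rewrite Sm_cat Sm_map IH /Sm /=; tauto.
Qed.

Lemma simp_sat f w : S w (Sm (simp f)) <-> S w f.
Proof.
elim: f w => [p|p|||f IHf g IHg|f IHf g IHg|f IHf|f IHf g IHg|f IHf g IHg] w;
  try by rewrite /Sm /=; tauto.
- by rewrite /= Sm_allpairs IHf IHg.
- by rewrite /= Sm_cat IHf IHg.
Qed.

Lemma Theta_nextF w cs : S w (Theta [seq (Some [::], c) | c <- cs]) <-> S (sdrop 1 w) (Sm cs).
Proof. rewrite /Sm; elim: cs => [|c cs IH] /=; first by tauto. by rewrite IH; tauto. Qed.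

Lemma main f w : S w (Theta (LF f)) <-> S w f.
Proof.
elim: f w => [p|p|||f IHf g IHg|f IHf g IHg|f IHf|f IHf g IHg|f IHf g IHg] w /=.
- by rewrite /lit_formula /=; tauto.
- by rewrite /lit_formula /=; tauto.
- by tauto.
- by tauto.
- by rewrite Theta_and IHf IHg.
- by rewrite Theta_cat IHf IHg.
- by rewrite Theta_nextF simp_sat.
- by rewrite Theta_cat Theta_next IHf IHg -until_exp.
- by rewrite Theta_cat Theta_and Theta_next IHf IHg -release_exp.
Qed.

End Proof.

Theorem theorem2 (AP : finType) (phi : ltl AP) :
  ltl_equiv (Theta (LF phi)) phi.
Proof. by move=> Sigma I w; apply: main. Qed.
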